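(* Let $m, N$ be positive integers with $N \geq 2$, let $A \in \mathbb{R}^{m\times N}$ have columns $a_1,\dots,a_N \in \mathbb{R}^m$, and let $q = \log(N)$. Let $\|\cdot\|$ be a norm on $\mathbb{R}^m$ with dual norm $\|\cdot\|_*$, and let $S^{\|\cdot\|_*} = \{w \in \mathbb{R}^m : \|w\|_* = 1\}$. If, for some $D>0$, \[ \inf_{w \in S^{\|\cdot\|_*}} \Big( \frac{1}{N}\sum_{i=1}^N |\langle a_i, w\rangle|^q \Big)^{1/q} \geq \frac{1}{D}\sqrt{\log\Big(\frac{eN}{m}\Big)}, \] then $\frac{1}{\sqrt{m}} A$ fulfills the $\ell_1$-quotient property with constant $D$ relative to the norm $\|\cdot\|$.
   Context: All logarithms are natural. The dual norm is $\|w\|_* = \sup_{\|z\| \leq 1} |\langle w, z\rangle|$. A matrix $M \in \mathbb{R}^{m\times N}$ has the $\ell_1$-quotient property with constant $d$ relative to a norm $\|\cdot\|$ on $\mathbb{R}^m$ if for every $w \in \mathbb{R}^m$ there exists $u \in \mathbb{R}^N$ with $Mu = w$ and $\|u\|_1 \leq d\, s_*^{1/2}\|w\|$, where $s_* = m/\log(eN/m)$. *)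

(* Defs.v *)
From HB Require Import structures.
From mathcomp Require Import all_boot all_order all_algebra.
From mathcomp Require Import all_classical all_reals all_analysis.
Set Implicit Arguments. Unset Strict Implicit. Unset Printing Implicit Defensive.
Import Order.TTheory GRing.Theory Num.Theory.
Local Open Scope classical_set_scope.
Local Open Scope ring_scope.

Definition dotv (R : realType) (m : nat) (v w : 'cV[R]_m) : R :=
  \sum_(k < m) v k 0 * w k 0.

Definition is_norm (R : realType) (m : nat) (nrm : 'cV[R]_m -> R) : Prop :=
  [/\ forall x, 0 <= nrm x,
      forall x, nrm x = 0 -> x = 0,
      forall (a : R) x, nrm (a *: x) = `|a| * nrm x
    & forall x y, nrm (x + y) <= nrm x + nrm y].

Definition dual_norm (R : realType) (m : nat) (nrm : 'cV[R]_m -> R)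
  (w : 'cV[R]_m) : R :=
  sup [set `|dotv w z| | z in [set z | nrm z <= 1]].

Definition s_star (R : realType) (m N : nat) : R :=
  m%:R / ln (expR 1 * N%:R / m%:R).

Definition l1norm (R : realType) (N : nat) (u : 'cV[R]_N) : R :=
  \sum_(j < N) `|u j 0|.

Definition l1_quotient_property (R : realType) (m N : nat)
  (M : 'M[R]_(m, N)) (d : R) (nrm : 'cV[R]_m -> R) : Prop :=
  forall w : 'cV[R]_m, exists u : 'cV[R]_N,
    M *m u = w /\ l1norm u <= d * Num.sqrt (s_star R m N) * nrm w.

Definition col_moment (R : realType) (m N : nat) (A : 'M[R]_(m, N))
  (q : R) (w : 'cV[R]_m) : R :=
  powR (N%:R^-1 * \sum_(i < N) powR `|dotv (col i A) w| q) q^-1.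

(* Main.v *)
Require Import Defs.
From HB Require Import structures.
From mathcomp Require Import all_boot all_order all_algebra.
From mathcomp Require Import all_classical all_reals all_analysis.
From mathcomp Require Import ring lra.
Import Order.TTheory GRing.Theory Num.Theory.
Import numFieldNormedType.Exports.
Local Open Scope classical_set_scope.
Local Open Scope ring_scope.
Section E.
Variable R : realType.
Let T (n : nat) : R := series (exp_coeff (1:R)) n.

Let TS n : T n.+1 = T n + (n`!%:R)^-1.
Proof. by rewrite /T /series /= big_nat_recr //= /exp_coeff /= (expr1n R n) mul1r. Qed.

Let Tint n : exists K : nat, n`!%:R * T n.+1 = K%:R.
Proof.
elim: n => [|n [K HK]].
  by exists 1%N; rewrite TS /T /series /= big_geq // fact0 add0r invr1 mulr1.
exists (n.+1 * K + 1)%N.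
have f0 : (n.+1)`!%:R != 0 :> R by rewrite pnatr_eq0 -lt0n fact_gt0.
rewrite TS mulrDr mulfV // factS natrM -mulrA HK natrD natrM //.
Qed.

Let fact_ge (N j : nat) : (2 <= N)%N -> (N`! * 3 ^ j.+1 <= (N + j.+1)`!)%N.
Proof.
move=> N2; elim: j => [|j IH].
  by rewrite expn1 addn1 factS mulnC leq_mul2r ltnS N2 orbT.
rewrite expnS (addnS N j.+1) factS mulnCA mulnC [X in (_ <= X)%N]mulnC.
apply: leq_mul => //; rewrite ltnS; apply: leq_trans N2 _; exact: leq_addr.
Qed.

Let Tup N j : (2 <= N)%N ->
  N`!%:R * (T (N.+1 + j) - T N.+1) <= (1 - (3%:R^-1) ^+ j) / 2%:R.
Proof.
move=> N2; elim: j => [|j IH].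
  by rewrite addn0 subrr mulr0 expr0 subrr mul0r.
rewrite addnS TS addrAC mulrDr.
have H : N`!%:R * ((N.+1 + j)`!%:R)^-1 <= (3%:R^-1) ^+ j.+1 :> R.
  have := fact_ge N j N2; rewrite -(ler_nat R) natrM natrX => h.
  rewrite exprVn ler_pdivrMr ?ltr0n ?fact_gt0 // mulrC ler_pdivlMr ?exprn_gt0 ?ltr0n //.
  by rewrite addSnnS.
apply: le_trans (lerD IH H) _.
rewrite exprS le_eqVlt; apply/orP; left; apply/eqP; field; rewrite ?pnatr_eq0 ?oner_eq0 //=.
Qed.

Lemma eN_neq_m (m N : nat) : (2 <= N)%N -> expR 1 * N%:R != m%:R :> R.
Proof.
move=> N2; apply/eqP => He.
have cvT := @is_cvg_series_exp_coeff R 1.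
have eT : expR 1 = limn (series (exp_coeff (1:R))) by [].
have ndT : {homo (series (exp_coeff (1:R))) : a b / (a <= b)%N >-> a <= b}.
  move=> a b ab; rewrite /T /series /=.
  rewrite (big_cat_nat (leq0n a) ab) /= lerDl.
  apply: sumr_ge0 => i _; rewrite /exp_coeff /= (expr1n R i) mul1r invr_ge0 ler0n //.
have lo : T N.+2 <= expR 1 by rewrite eT; exact: (nondecreasing_cvgn_le ndT cvT).
have hi : expR 1 <= T N.+1 + (N`!%:R)^-1 / 2%:R.
  rewrite eT; apply: limr_le => //; near=> n; change (T n <= T N.+1 + (N`!%:R)^-1 / 2%:R).
  have hn : (N.+1 <= n)%N by near: n; exact: nbhs_infty_ge.
  rewrite -(subnKC hn).
  have := Tup N (n - N.+1) N2.
  rewrite -ler_pdivlMl ?ltr0n ?fact_gt0 // => h.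
  rewrite -lerBlDl; apply: le_trans h _.
  have ha : 0 <= 3^-1 ^+ (n - N.+1) :> R by rewrite exprn_ge0 // invr_ge0 ler0n.
  rewrite ler_wpM2l ?invr_ge0 ?ler0n //; lra.
have [K HK] := Tint N.
have Nf : N`!%:R * expR 1 = (m * N.-1`!)%:R :> R.
  have N1 : N = N.-1.+1 by rewrite prednK // (leq_trans _ N2).
  by rewrite {1}N1 factS -N1 natrM mulrAC [N%:R * _]mulrC He natrM.
have f0 : 0 < N`!%:R :> R by rewrite ltr0n fact_gt0.
have lo' : K%:R < (m * N.-1`!)%:R :> R.
  rewrite -Nf -HK ltr_pM2l //; apply: lt_le_trans lo.
  by rewrite (TS N.+1) ltrDl invr_gt0 ltr0n fact_gt0.
have hi' : (m * N.-1`!)%:R <= K%:R + 2%:R^-1 :> R.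
  rewrite -Nf -HK -ler_pdivlMl // mulrDr mulrA mulVf ?gt_eqF // mul1r.
  exact: hi.
rewrite ltr_nat in lo'.
have : (K.+1)%:R <= K%:R + 2%:R^-1 :> R.
  by apply: le_trans hi'; rewrite ler_nat.
rewrite -addn1 natrD lerD2l => h; lra.
Unshelve. all: by end_near.
Qed.
End E.
Section Aux.
Variable R : realType.

Lemma coord_le_norm p q (x : 'M[R]_(p,q)) i j : `|x i j| <= `|x|.
Proof.
rewrite [leRHS]/Num.norm /= mx_normrE; apply/bigmax_geP; right => /=.
by exists (i, j).
Qed.

Lemma lip_continuous (T : normedModType R) (f : T -> R) B :
  (forall x y, `|f x - f y| <= B * `|x - y|) -> continuous f.
Proof.
move=> H x; apply/cvgrPdist_lt => e e0.
have B1 : 0 < `|B| + 1 by rewrite ltr_pwDr.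
have d0 : 0 < e / (`|B| + 1) by rewrite divr_gt0.
apply: filterS (near_ball x _ d0) => t; rewrite -ball_normE /ball_ /= => xt.
apply: le_lt_trans (H x t) _.
apply: (@le_lt_trans _ _ ((`|B| + 1) * `|x - t|)).
  apply: ler_wpM2r; first exact: normr_ge0.
  by apply: le_trans (ler_norm B) _; rewrite lerDl.
by rewrite mulrC -ltr_pdivlMr.
Qed.

Variable m : nat.
Variable nrm : 'cV[R]_m -> R.
Hypothesis Hn : is_norm nrm.

Lemma nrm0 : nrm 0 = 0.
Proof. by case: Hn => _ _ hZ _; have := hZ 0 0; rewrite scale0r normr0 mul0r. Qed.

Lemma nrm_ge0 z : 0 <= nrm z.
Proof. by case: Hn => h _ _ _; exact: h. Qed.

Lemma nrmZ a z : nrm (a *: z) = `|a| * nrm z.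
Proof. by case: Hn => _ _ h _; exact: h. Qed.

Lemma nrmD x y : nrm (x + y) <= nrm x + nrm y.
Proof. by case: Hn => _ _ _ h; exact: h. Qed.

Lemma nrm_eq0 z : nrm z = 0 -> z = 0.
Proof. by case: Hn => _ h _ _; exact: h. Qed.

Lemma nrmN z : nrm (- z) = nrm z.
Proof. by rewrite -scaleN1r nrmZ normrN normr1 mul1r. Qed.

Lemma nrm_sum (I : Type) (r : seq I) (P : pred I) (F : I -> 'cV[R]_m) :
  nrm (\sum_(i <- r | P i) F i) <= \sum_(i <- r | P i) nrm (F i).
Proof.
apply: (big_ind2 (fun a b => nrm a <= b)) => //; first by rewrite nrm0.
by move=> x1 x2 y1 y2 h1 h2; apply: le_trans (nrmD _ _) (lerD h1 h2).
Qed.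

Lemma nrm_coord z : nrm z <= \sum_k `|z k 0| * nrm (delta_mx k 0).
Proof.
rewrite {1}(matrix_sum_delta z); apply: le_trans; first exact: nrm_sum.
by apply: ler_sum => k _; rewrite big_ord1 nrmZ.
Qed.

Lemma nrm_lip x y : `|nrm x - nrm y| <= nrm (x - y).
Proof.
rewrite ler_distl; apply/andP; split.
  have := nrmD x (y - x); rewrite [x + _]addrC subrK -opprB nrmN.
  by rewrite lerBlDr addrC.
by have := nrmD y (x - y); rewrite [y + _]addrC subrK.
Qed.

Let g (x : 'rV[R]_m) := nrm x^T.

Let gcont : continuous g.
Proof.
apply: (@lip_continuous _ g (\sum_(k < m) nrm (delta_mx k 0))) => x y.
apply: le_trans (nrm_lip _ _) _; rewrite -linearB /=.
apply: le_trans (nrm_coord _) _; rewrite mulr_suml; apply: ler_sum => k _.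
rewrite mulrC ler_wpM2l ?nrm_ge0 // mxE; exact: coord_le_norm.
Qed.

Lemma norm_equiv : (0 < m)%N -> exists2 c : R, 0 < c & forall (z : 'cV[R]_m) k, `|z k 0| <= c * nrm z.
Proof.
move=> m0.
pose Sp := [set x : 'rV[R]_m | `|x| = 1].
have cSp : compact Sp.
  apply: bounded_closed_compact.
    exists 1; split; first exact: real1.
    by move=> M M1 x; rewrite /Sp /= => ->; exact: ltW.
  have -> : Sp = Num.norm @^-1` [set x | x = 1] by [].
  apply: preimage_closed; last exact: closed_eq.
  by move=> x _; exact: norm_continuous.
have Sp0 : Sp !=set0.
  pose v : 'rV[R]_m := const_mx 1.
  have v0 : v != 0.
    apply/eqP => /matrixP /(_ 0 (Ordinal m0)); rewrite !mxE => /eqP.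
    by rewrite oner_eq0.
  exists (`|v|^-1 *: v); rewrite /Sp /= normrZ normrV ?unitfE ?normr_eq0 //.
  by rewrite normr_id mulVf // normr_eq0.
have [c0 Sc0 minc] := EVT_min_rV Sp0 cSp (continuous_subspaceT gcont).
have gc0 : 0 < g c0.
  rewrite lt_neqAle nrm_ge0 andbT; apply/eqP => /esym /nrm_eq0 h.
  have : c0 = 0 by rewrite -[c0]trmxK h linear0.
  move: Sc0; rewrite inE /Sp /= => h1 h2; move: h1; rewrite h2 normr0 => /eqP.
  by rewrite eq_sym oner_eq0.
exists (g c0)^-1; first by rewrite invr_gt0.
move=> z k.
have [->|z0] := eqVneq z 0; first by rewrite mxE normr0 nrm0 mulr0.
have zT0 : `|z^T| != 0 by rewrite normr_eq0 -(inj_eq (@trmx_inj _ _ _)) trmxK linear0.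
have zT0' : 0 < `|z^T| by rewrite lt_neqAle eq_sym zT0 normr_ge0.
have Sx : (`|z^T|^-1 *: z^T) \in Sp.
  rewrite inE /Sp /= normrZ normrV ?unitfE // normr_id mulVf //.
have := minc _ Sx; rewrite /g linearZ /= trmxK nrmZ normrV ?unitfE // normr_id.
move=> h; apply: (le_trans (_ : _ <= `|z^T|)).
  by have := @coord_le_norm _ _ z^T 0 k; rewrite mxE.
rewrite mulrC ler_pdivlMr //; rewrite ler_pdivlMl // in h.
Qed.
End Aux.
Arguments nrm0 {R m nrm}.
Arguments nrm_ge0 {R m nrm}.
Arguments nrmZ {R m nrm}.
Arguments nrmD {R m nrm}.
Arguments nrm_eq0 {R m nrm}.
Arguments nrmN {R m nrm}.
Arguments nrm_sum {R m nrm}.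
Arguments nrm_coord {R m nrm}.
Arguments nrm_lip {R m nrm}.
Arguments norm_equiv {R m nrm}.
Section Dot.
Context {R : realType} {m : nat}.
Implicit Types (u v w : 'cV[R]_m).

Lemma dotvC u v : dotv u v = dotv v u.
Proof. by apply: eq_bigr => k _; rewrite mulrC. Qed.

Lemma dotvDr u v w : dotv u (v + w) = dotv u v + dotv u w.
Proof. by rewrite /dotv -big_split; apply: eq_bigr => k _; rewrite mxE mulrDr. Qed.

Lemma dotvZr a u v : dotv u (a *: v) = a * dotv u v.
Proof. by rewrite /dotv mulr_sumr; apply: eq_bigr => k _; rewrite mxE mulrCA. Qed.

Lemma dotvNr u v : dotv u (- v) = - dotv u v.
Proof. by rewrite -scaleN1r dotvZr mulN1r. Qed.

Lemma dotvBr u v w : dotv u (v - w) = dotv u v - dotv u w.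
Proof. by rewrite dotvDr dotvNr. Qed.

Lemma dotvZl a u v : dotv (a *: u) v = a * dotv u v.
Proof. by rewrite dotvC dotvZr dotvC. Qed.

Lemma dotv0r u : dotv u 0 = 0.
Proof. by rewrite /dotv big1 // => k _; rewrite mxE mulr0. Qed.

Lemma dotv_self_gt0 u : u != 0 -> 0 < dotv u u.
Proof.
move=> u0.
have [k uk] : exists k, u k 0 != 0.
  apply/existsP; apply: contraNT u0 => /existsPn h; apply/eqP/matrixP => i j.
  by rewrite mxE (ord1 j); apply/eqP/negPn/h.
apply: (lt_le_trans (_ : 0 < u k 0 * u k 0)).
  by rewrite -expr2 exprn_even_gt0 // uk orbT.
rewrite /dotv (bigD1 k) //= lerDl sumr_ge0 // => i _.
by rewrite -expr2 sqr_ge0.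
Qed.
End Dot.

Section Dual.
Variable R : realType.
Variable m : nat.
Variable nrm : 'cV[R]_m -> R.
Hypothesis Hn : is_norm nrm.
Hypothesis m0 : (0 < m)%N.

Let DS (r : 'cV[R]_m) := [set `|dotv r z| | z in [set z | nrm z <= 1]].

Let DS_bounded r : has_ubound (DS r).
Proof.
have [c c0 hc] := norm_equiv Hn m0.
exists (c * \sum_k `|r k 0|) => _ [z zin <-].
rewrite /dotv; apply: le_trans (ler_norm_sum _ _ _) _.
rewrite mulr_sumr; apply: ler_sum => k _; rewrite normrM mulrC ler_wpM2r //.
by apply: le_trans (hc z k) _; rewrite ler_piMr // ltW.
Qed.

Let DS0 r : DS r !=set0.
Proof. by exists (`|dotv r 0|), 0 => //=; rewrite nrm0 // ler01. Qed.

Lemma dual_ge0 r : 0 <= dual_norm nrm r.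
Proof.
apply: le_trans (ub_le_sup (DS_bounded r) _); first exact: (normr_ge0 (dotv r 0)).
by exists 0 => //=; rewrite nrm0 // ler01.
Qed.

Lemma dual_ge r w : `|dotv r w| <= dual_norm nrm r * nrm w.
Proof.
have [->|w0] := eqVneq w 0.
  by rewrite dotv0r normr0 nrm0 // mulr0.
have nw : 0 < nrm w.
  rewrite lt_neqAle nrm_ge0 // andbT; apply/eqP => /esym /(nrm_eq0 Hn) h.
  by rewrite h eqxx in w0.
have Dz : DS r `|dotv r ((nrm w)^-1 *: w)|.
  exists ((nrm w)^-1 *: w) => //=.
  by rewrite (nrmZ Hn) ger0_norm ?invr_ge0 ?(nrm_ge0 Hn) // mulVf ?gt_eqF.
have := ub_le_sup (DS_bounded r) Dz.
rewrite dotvZr normrM ger0_norm ?invr_ge0 ?(nrm_ge0 Hn) // => h.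
by rewrite mulrC -ler_pdivrMl // mulrC.
Qed.

Lemma dual_pos r : r != 0 -> 0 < dual_norm nrm r.
Proof.
move=> r0; have := dual_ge0 r; rewrite le_eqVlt => /orP [/eqP h|//].
have := dual_ge r r; rewrite -h mul0r => h2.
have := dotv_self_gt0 _ r0; rewrite lt_neqAle => /andP [h3 _].
move: h2; rewrite normr_le0 => /eqP h4; by rewrite h4 eqxx in h3.
Qed.

Lemma dual_scale_le a r : 0 < a -> dual_norm nrm (a *: r) <= a * dual_norm nrm r.
Proof.
move=> a0; apply: ge_sup; first exact: DS0.
move=> _ [z zin <-]; rewrite dotvZl normrM (ger0_norm (ltW a0)) ler_wpM2l ?(ltW a0) //.
have h : DS r `|dotv r z| by exists z.
exact: (ub_le_sup (DS_bounded r) h).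
Qed.

Lemma dual_scale a r : 0 < a -> dual_norm nrm (a *: r) = a * dual_norm nrm r.
Proof.
move=> a0; apply/le_anti; rewrite dual_scale_le //=.
have := dual_scale_le (a^-1) (a *: r); rewrite invr_gt0 a0 scalerA mulVf ?gt_eqF //.
by rewrite scale1r => /(_ isT) h; rewrite ler_pdivlMl in h.
Qed.
End Dual.
Arguments dual_ge0 {R m nrm}.
Arguments dual_ge {R m nrm}.
Arguments dual_pos {R m nrm}.
Arguments dual_scale_le {R m nrm}.
Arguments dual_scale {R m nrm}.

Lemma powmean_le (R : realType) (N : nat) (x : 'I_N -> R) (q X : R) :
  (0 < N)%N -> 0 < q -> 0 <= X -> (forall i, 0 <= x i <= X) ->
  powR (N%:R^-1 * \sum_i powR (x i) q) q^-1 <= X.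
Proof.
move=> N0 q0 X0 hx.
have h1 : N%:R^-1 * \sum_i powR (x i) q <= powR X q.
  rewrite -ler_pdivlMl ?invr_gt0 ?ltr0n // invrK.
  apply: le_trans (_ : \sum_(i < N) powR X q <= _).
    apply: ler_sum => i _; case/andP: (hx i) => h0 h1.
    by apply: ge0_ler_powR; rewrite ?nnegrE ?(ltW q0).
  by rewrite sumr_const card_ord mulr_natl.
apply: le_trans (_ : powR (powR X q) q^-1 <= _).
  apply: ge0_ler_powR => //; first by rewrite invr_ge0 ltW.
    by rewrite nnegrE mulr_ge0 ?invr_ge0 ?ler0n // sumr_ge0 // => i _; exact: powR_ge0.
  by rewrite nnegrE powR_ge0.
by rewrite -powRrM mulfV ?gt_eqF // powRr1.
Qed.
Section Cont.
Variable R : realType.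

Lemma cont_coord (N : nat) j : continuous (fun u : 'rV[R]_N => u 0 j).
Proof. exact: coord_continuous. Qed.

Lemma cont_sum (T : topologicalType) (n : nat) (F : 'I_n -> T -> R) :
  (forall i, continuous (F i)) -> continuous (fun x => \sum_(i < n) F i x).
Proof.
move=> h; apply: (@continuous_big _ _ +%R 0 xpredT _ _ (index_enum _) F) => //.
exact: add_continuous.
Qed.
Lemma contM (T : topologicalType) (f g : T -> R) :
  continuous f -> continuous g -> continuous (fun x => f x * g x).
Proof. by move=> hf hg x; exact: (continuousM (hf x) (hg x)). Qed.

Lemma contB (T : topologicalType) (f g : T -> R) :
  continuous f -> continuous g -> continuous (fun x => f x - g x).
Proof. by move=> hf hg x; exact: (continuousB (hf x) (hg x)). Qed.
End Cont.

Lemma mul_delta_col (R : realType) m N (M : 'M[R]_(m, N)) j :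
  M *m delta_mx j 0 = col j M.
Proof. by rewrite colE. Qed.

Theorem lemma4p4 (R : realType) (m N : nat) (A : 'M[R]_(m, N))
  (nrm : 'cV[R]_m -> R) (D : R) :
  (0 < m)%N -> (2 <= N)%N ->
  (m%:R <= expR 1 * N%:R :> R) ->
  is_norm nrm -> 0 < D ->
  inf [set col_moment A (ln N%:R) w | w in [set w | dual_norm nrm w = 1]]
    >= D^-1 * Num.sqrt (ln (expR 1 * N%:R / m%:R)) ->
  l1_quotient_property ((Num.sqrt m%:R)^-1 *: A) D nrm.
Proof.
move=> m0 N2 meN Hn D0 Hinf w.
set q := ln (N%:R : R) in Hinf.
set L := ln (expR 1 * N%:R / m%:R : R) in Hinf.
set c := D^-1 * Num.sqrt L in Hinf.
have N0 : (0 < N)%N by apply: leq_trans N2.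
have q0 : 0 < q by apply: ln_gt0; rewrite ltr1n.
have mpos : 0 < m%:R :> R by rewrite ltr0n.
have L0 : 0 < L.
  apply: ln_gt0; rewrite ltr_pdivlMr // mul1r lt_neqAle meN andbT eq_sym.
  exact: eN_neq_m.
have c0 : 0 < c by rewrite mulr_gt0 ?invr_gt0 // sqrtr_gt0.
have key : forall r : 'cV[R]_m, r != 0 -> forall Y, 0 <= Y ->
    (forall i, `|dotv (col i A) r| <= Y) -> c * dual_norm nrm r <= Y.
  move=> r r0 Y Y0 hY.
  have d0 := dual_pos Hn m0 r r0.
  set d := dual_norm nrm r in d0 *.
  set v := d^-1 *: r.
  have dv : dual_norm nrm v = 1 by rewrite dual_scale ?invr_gt0 // mulVf ?gt_eqF.
  have h1 : inf [set col_moment A q w | w in [set w | dual_norm nrm w = 1]]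
      <= col_moment A q v.
    apply: ge_inf; last by exists v.
    by exists 0 => _ [z _ <-]; rewrite /col_moment; exact: powR_ge0.
  have h2 : col_moment A q v <= d^-1 * Y.
    apply: powmean_le => //; first by rewrite mulr_ge0 // invr_ge0 ltW.
    move=> i; rewrite normr_ge0 /= /v dotvZr normrM ger0_norm ?invr_ge0 ?(ltW d0) //.
    by rewrite ler_wpM2l ?invr_ge0 ?(ltW d0).
  have := le_trans Hinf (le_trans h1 h2).
  by rewrite ler_pdivlMl // mulrC.

have [Mx MxE] : {Mx : 'M[R]_(m, N) | Mx = (Num.sqrt m%:R)^-1 *: A} by exists ((Num.sqrt m%:R)^-1 *: A).
rewrite -MxE.
have sm0 : 0 < Num.sqrt m%:R :> R by rewrite sqrtr_gt0.
have ss : D * Num.sqrt (s_star R m N) = Num.sqrt m%:R / c.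
  rewrite /s_star -/L /c sqrtrM ?ler0n // sqrtrV ?ltW // invfM invrK.
  by rewrite mulrCA.
rewrite ss.
have [->|w0] := eqVneq w 0.
  exists 0; split; first by rewrite mulmx0.
  by rewrite (nrm0 Hn) mulr0 /l1norm big1 // => j _; rewrite mxE normr0.
have nw : 0 < nrm w.
  rewrite lt_neqAle (nrm_ge0 Hn) andbT; apply/eqP => /esym /(nrm_eq0 Hn) h.
  by rewrite h eqxx in w0.
set t := Num.sqrt m%:R / c * nrm w.
have t0 : 0 < t by rewrite /t mulr_gt0 // divr_gt0.
pose f := fun u : 'rV[R]_N => dotv (w - Mx *m u^T) (w - Mx *m u^T).
pose K := [set u : 'rV[R]_N | \sum_j `|u 0 j| <= t].
have fE : f = fun u => \sum_k (w k 0 - \sum_j Mx k j * u 0 j) *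
                           (w k 0 - \sum_j Mx k j * u 0 j).
  apply/funext => u; rewrite /f /dotv; apply: eq_bigr => k _.
  have -> : (w - Mx *m u^T) k 0 = w k 0 - \sum_j Mx k j * u 0 j.
    by rewrite !mxE; congr (_ - _); apply: eq_bigr => j _; rewrite mxE.
  by [].
have fc : continuous f.
  rewrite fE.
  have hl : forall k, continuous (fun u : 'rV[R]_N => w k 0 - \sum_j Mx k j * u 0 j).
    move=> k; apply: contB; first exact: cst_continuous.
    apply: (@cont_sum R _ N (fun j (u : 'rV[R]_N) => Mx k j * u 0 j)) => j.
    apply: contM; first exact: cst_continuous.
    exact: cont_coord.
  apply: (@cont_sum R _ m (fun k (u : 'rV[R]_N) => (w k 0 - \sum_j Mx k j * u 0 j) *
                           (w k 0 - \sum_j Mx k j * u 0 j))) => k.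
  by apply: contM; apply: hl.
have Kc : compact K.
  apply: bounded_closed_compact.
    exists t; split; first exact: ger0_real (ltW t0).
    move=> M tM u Ku; rewrite /Num.norm /= mx_normrE; apply: bigmax_le => [|[i j] _] /=.
      by apply: le_trans (ltW t0) (ltW tM).
    rewrite (ord1 i); apply: le_trans (ltW tM); apply: le_trans Ku.
    by rewrite (bigD1 j) //= lerDl sumr_ge0.
  apply: (@preimage_closed _ _ (fun u : 'rV[R]_N => \sum_j `|u 0 j|) [set x | x <= t]).
    move=> x _; apply: (@cont_sum R _ N (fun j (u : 'rV[R]_N) => `|u 0 j|)) => j y.
    apply: continuous_comp; first exact: cont_coord.
    exact: norm_continuous.
  exact: closed_le.
have K0 : K !=set0.
  by exists 0; rewrite /K /= big1 ?ltW // => j _; rewrite mxE normr0.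
have [u0 Ku0 minf] := EVT_min_rV K0 Kc (continuous_subspaceT fc).
set U0 := u0^T.
have [r rE] : {r : 'cV[R]_m | r = w - Mx *m U0} by eexists.
have Ku0' : \sum_j `|u0 0 j| <= t by move: Ku0; rewrite inE.
have [r0|rn0] := eqVneq r 0.
  exists U0; split.
    by move/eqP: r0; rewrite rE subr_eq0 => /eqP <-.
  rewrite /l1norm; apply: le_trans Ku0'; rewrite le_eqVlt; apply/orP; left.
  by apply/eqP; apply: eq_bigr => j _; rewrite mxE.
have var : forall u, K u -> dotv r (Mx *m (u^T - U0)) <= 0.
  move=> u Ku.
  set d := Mx *m (u^T - U0).
  set a := dotv r d.
  set b := dotv d d.
  have b0 : 0 <= b by rewrite /b /dotv sumr_ge0 // => k _; rewrite -expr2 sqr_ge0.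
  have hs : forall s, 0 < s -> s <= 1 -> 2 * a <= s * b.
    move=> s s0 s1.
    have Ks : (u0 + s *: (u - u0)) \in K.
      rewrite inE /K /=.
      apply: le_trans (_ : \sum_j ((1 - s) * `|u0 0 j| + s * `|u 0 j|) <= _).
        apply: ler_sum => j _; rewrite !mxE.
        have -> : u0 0 j + s * (u 0 j - u0 0 j) = (1 - s) * u0 0 j + s * u 0 j by ring.
        apply: le_trans (ler_normD _ _) _.
        by rewrite !normrM (ger0_norm (ltW s0)) ger0_norm ?subr_ge0.
      rewrite big_split /= -!mulr_sumr.
      apply: le_trans (lerD (ler_wpM2l _ Ku0') (ler_wpM2l _ Ku)) _.
      - by rewrite subr_ge0.
      - exact: ltW.
      - by rewrite -mulrDl subrK mul1r.
    have := minf _ Ks; rewrite /f.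
    have -> : w - Mx *m (u0 + s *: (u - u0))^T = r - s *: d.
      by rewrite rE linearD linearZ /= linearB /= mulmxDr scalemxAr opprD addrA.
    rewrite -/U0 -rE (dotvBr (r - s *: d) r (s *: d)) (dotvZr s (r - s *: d) d).
    rewrite (dotvC (r - s *: d) r) (dotvC (r - s *: d) d).
    rewrite (dotvBr r r (s *: d)) (dotvBr d r (s *: d)) (dotvZr s r d) (dotvZr s d d).
    rewrite (dotvC d r) -/a -/b => h.
    rewrite -(ler_pM2l s0); nra.
  rewrite leNgt; apply/negP => a0.
  have [ab|ba] := lerP a b.
    have bpos : 0 < b by apply: lt_le_trans ab.
    have := hs (a / b); rewrite divr_gt0 // ler_pdivrMr // mul1r => /(_ isT ab).
    rewrite mulrAC -mulrA mulfV ?gt_eqF // mulr1 => h; lra.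
  by have := hs 1 ltr01 (lexx _); rewrite mul1r => h; lra.
set P := dotv r (Mx *m U0).
have hcol : forall j, t * `|dotv r (col j Mx)| <= P.
  move=> j.
  have hv : forall e : R, `|e| = 1 -> e * t * dotv r (col j Mx) <= P.
    move=> e he.
    have hK : K (e * t *: delta_mx 0 j).
      rewrite /K /= (bigD1 j) //= big1 ?addr0 => [|i ij]; last first.
        by rewrite !mxE eqxx (negbTE ij) mulr0 normr0.
      by rewrite !mxE !eqxx mulr1 normrM he mul1r ger0_norm // ltW.
    have := var _ hK.
    rewrite linearZ /= trmx_delta mulmxBr -scalemxAr mul_delta_col dotvBr dotvZr.
    by rewrite subr_le0.
  have [x0|x0] := leP 0 (dotv r (col j Mx)).
    by rewrite ger0_norm //; have := hv 1 (normr1 _); rewrite mul1r.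
  have h1 : `|(-1 : R)| = 1 by rewrite normrN normr1.
  by rewrite ltr0_norm // mulrN -mulNr; have := hv (-1) h1; rewrite mulN1r.
have Pge0 : 0 <= P.
  apply: le_trans (hcol (Ordinal N0)).
  by apply: mulr_ge0; [exact: ltW | exact: normr_ge0].
set Y := Num.sqrt m%:R * P / t.
have Y0 : 0 <= Y.
  by apply: divr_ge0; [apply: mulr_ge0 => //; exact: ltW | exact: ltW].
have hY : forall i, `|dotv (col i A) r| <= Y.
  move=> i.
  have hc : col i Mx = (Num.sqrt m%:R)^-1 *: col i A.
    by apply/matrixP => k l; rewrite MxE !mxE.
  have := hcol i; rewrite hc dotvZr dotvC normrM ger0_norm ?invr_ge0 ?(ltW sm0) // => h.
  rewrite /Y ler_pdivlMr //; apply: le_trans (ler_wpM2l (ltW sm0) h).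
  rewrite le_eqVlt; apply/orP; left; apply/eqP; field.
  by rewrite gt_eqF.
have kY := key r rn0 Y Y0 hY.
have rw : dotv r w = dotv r r + P.
  have -> : w = r + Mx *m U0 by rewrite rE subrK.
  by rewrite dotvDr.
have rr := dotv_self_gt0 _ rn0.
have hd := dual_ge Hn m0 r w.
have hd2 : dual_norm nrm r * nrm w <= P.
  have -> : P = Y / c * nrm w.
    rewrite /Y /t; field.
    by rewrite !gt_eqF.
  by rewrite ler_wpM2r ?(ltW nw) // ler_pdivlMr // mulrC.
have := le_trans (ler_norm _) (le_trans hd hd2); rewrite rw; lra.
Qed.
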